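(* Let $0\le\theta\le1$, let $K\subset\mathbb{C}^d$ be compact and $\mu$ a Borel probability measure with support in $K$ such that $(K,\mu)$ satisfies the Bernstein–Markov property for $\theta$-incomplete polynomials. Then for every $\epsilon>0$ there exists $C>0$ such that for all $N$ and all $z\in\mathbb{C}^d$, $$\frac{(\Phi_{K,\theta,N}(z))^2}{d(N,\theta)}\le K_{N,\theta}(z,z)\le Ce^{\epsilon N}(\Phi_{K,\theta,N}(z))^2\,d(N,\theta).$$
   Context: $\pi_{N,\theta}$ is the space of polynomials $\sum_{|\alpha|=\lceil N\theta\rceil}^Nc_\alpha z^\alpha$ on $\mathbb{C}^d$, of dimension $d(N,\theta)$. $(K,\mu)$ satisfies the Bernstein–Markov property for $\theta$-incomplete polynomials if for every $\epsilon>0$ there is $C>0$ with $\|P\|_K\le Ce^{\epsilon N}\|P\|_{L^2(\mu)}$ for all $P\in\pi_{N,\theta}$, all $N\ge0$. $\Phi_{K,\theta,N}(z)=\sup\{|f(z)|:f\in\pi_{N,\theta},\ \|f\|_K\le1\}$. If $\{P_j\}_{j=1}^{d(N,\theta)}$ is an orthonormal basis of $\pi_{N,\theta}$ for $\langle f,g\rangle=\int f\bar g\,d\mu$, then $K_{N,\theta}(z,w)=\sum_jP_j(z)\overline{P_j(w)}$. *)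

(* Defs.v *)
(* C^d is modelled by the real 2 x d
   matrices (row 0 = real parts, row 1 = imaginary parts) with their
   Euclidean (product) topology; complex numbers are R[i] (real_closed);
   polynomials on C^d are multinomials' {mpoly R[i][d]} (qualified names). *)
From HB Require Import structures.
From mathcomp Require Import all_boot all_order all_algebra.
From mathcomp Require Import all_classical all_reals all_analysis.
From mathcomp Require Import complex.
From mathcomp Require mpoly.
Import (canonicals, coercions) mpoly.
Set Implicit Arguments. Unset Strict Implicit. Unset Printing Implicit Defensive.
Import Order.TTheory GRing.Theory Num.Theory.
Import numFieldNormedType.Exports.
Local Open Scope classical_set_scope.
Local Open Scope ring_scope.

Section Defs.
Variables (R : realType) (d : nat).

Definition Cd := 'M[R]_(2, d).
Definition CdB := g_sigma_algebraType (@open Cd).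

Definition coord (z : Cd) : 'I_d -> R[i] :=
  fun j => (z ord0 j +i* z ord_max j)%C.

Definition cmod (c : R[i]) : R :=
  Num.sqrt (complex.Re c ^+ 2 + complex.Im c ^+ 2).

Local Notation cpoly := (mpoly.mpoly d R[i]).

Definition peval (P : cpoly) (z : Cd) : R[i] := mpoly.meval (coord z) P.

Definition in_pi (N : nat) (theta : R) (P : cpoly) : Prop :=
  forall m : mpoly.multinom d, mpoly.mcoeff m P != 0 ->
    (Num.ceil (N%:R * theta) <= (mpoly.mdeg m)%:Z) && (mpoly.mdeg m <= N)%N.

(* d(N,theta) = dim pi_{N,theta} = number of multi-indices alpha in N^d with
   ceil(N theta) <= |alpha| <= N (each alpha_i <= N) *)
Definition dNtheta (N : nat) (theta : R) : nat :=
  #|[set a : {ffun 'I_d -> 'I_N.+1} |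
     (Num.ceil (N%:R * theta) <= (\sum_i (a i : nat))%:Z) &&
     (\sum_i (a i : nat) <= N)%N]|.

Definition supnorm (K : set Cd) (f : Cd -> R[i]) : R :=
  sup [set cmod (f z) | z in K].

Definition cint (mu : probability CdB R) (h : Cd -> R[i]) : R[i] :=
  (Rintegral mu setT (fun z : CdB => complex.Re (h z))
   +i* Rintegral mu setT (fun z : CdB => complex.Im (h z)))%C.

Definition inner (mu : probability CdB R) (f g : Cd -> R[i]) : R[i] :=
  cint mu (fun z => f z * conjc (g z)).

Definition L2norm (mu : probability CdB R) (f : Cd -> R[i]) : R :=
  Num.sqrt (fine (\int[mu]_(z in setT) ((cmod (f (z : CdB))) ^+ 2)%:E)).

Definition BM_theta (K : set Cd) (mu : probability CdB R) (theta : R) : Prop :=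
  forall eps : R, 0 < eps -> exists C : R, 0 < C /\
    forall (N : nat) (P : cpoly), in_pi N theta P ->
      supnorm K (peval P) <= C * expR (eps * N%:R) * L2norm mu (peval P).

Definition Phi (K : set Cd) (theta : R) (N : nat) (z : Cd) : R :=
  sup [set cmod (peval P z) | P in
         [set P : cpoly | in_pi N theta P /\ supnorm K (peval P) <= 1]].

Definition is_onb (mu : probability CdB R) (N : nat) (theta : R) (n : nat)
    (B : 'I_n -> cpoly) : Prop :=
  [/\ forall j, in_pi N theta (B j),
      forall i j, inner mu (peval (B i)) (peval (B j)) = (i == j)%:R
    & forall P, in_pi N theta P ->
        exists c : 'I_n -> R[i], P = \sum_j c j *: B j].

Definition KNtheta (n : nat) (B : 'I_n -> cpoly) (z w : Cd) : R[i] :=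
  \sum_j peval (B j) z * conjc (peval (B j) w).

End Defs.
Notation cpoly R d := (mpoly.mpoly d R[i]).

(* Main.v *)
Require Import Defs.
From HB Require Import structures.
From mathcomp Require Import all_boot all_order all_algebra.
From mathcomp Require Import all_classical all_reals all_analysis.
From mathcomp Require Import complex.
From mathcomp Require Import measurable_realfun.
From mathcomp Require Import ring lra.
From mathcomp Require mpoly.
Import (canonicals, coercions) mpoly.
Import Order.TTheory GRing.Theory Num.Theory.
Import numFieldNormedType.Exports.
Local Open Scope classical_set_scope.
Local Open Scope ring_scope.
Set Implicit Arguments. Unset Strict Implicit. Unset Printing Implicit Defensive.

Section H.
Variables (R : realType) (d : nat).

Lemma cont_mfun (f : Cd R d -> R) : continuous f ->
  measurable_fun (setT : set (CdB R d)) f.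
Proof.
move=> /continuousP cf.
apply: (measurability _ (RGenOpens.measurableE R)).
move=> _ [_ [a [b ->] <-]]; rewrite setTI; apply: sub_sigma_algebra.
exact/cf/interval_open.
Qed.

Lemma compact_mes (K : set (Cd R d)) : compact K -> measurable (K : set (CdB R d)).
Proof.
move=> cK.
have cl : closed K by apply: compact_closed => //; exact: norm_hausdorff.
rewrite -[K]setCK; apply: measurableC; apply: sub_sigma_algebra.
exact: closed_openC.
Qed.

Lemma cont_bounded (K : set (Cd R d)) (f : Cd R d -> R) : compact K ->
  continuous f -> exists M, forall x, K x -> `|f x| <= M.
Proof.
move=> cK cf.
have cfK : compact [set f x | x in K].
  by apply: continuous_compact => //; apply: continuous_subspaceT.
have := compact_bounded cfK.
rewrite /bounded_near => /pinfty_ex_gt0 [M M0 HM].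
exists M => x Kx; apply: (HM (f x)); by exists x.
Qed.

Definition cc (f : Cd R d -> R[i]) :=
  continuous (fun z => complex.Re (f z)) /\ continuous (fun z => complex.Im (f z)).

Lemma ReD (x y : R[i]) : complex.Re (x + y) = complex.Re x + complex.Re y.
Proof. by case: x; case: y. Qed.
Lemma ImD (x y : R[i]) : complex.Im (x + y) = complex.Im x + complex.Im y.
Proof. by case: x; case: y. Qed.
Lemma ReM (x y : R[i]) : complex.Re (x * y) = complex.Re x * complex.Re y - complex.Im x * complex.Im y.
Proof. by case: x; case: y. Qed.
Lemma ImM (x y : R[i]) : complex.Im (x * y) = complex.Re x * complex.Im y + complex.Im x * complex.Re y.
Proof. by case: x => a b; case: y => c e /=; rewrite [b * c]mulrC. Qed.
Lemma ReJ (x : R[i]) : complex.Re (conjc x) = complex.Re x.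
Proof. by case: x. Qed.
Lemma ImJ (x : R[i]) : complex.Im (conjc x) = - complex.Im x.
Proof. by case: x. Qed.

Lemma cc_cst c : cc (fun=> c).
Proof. by split; apply: cst_continuous. Qed.

Lemma cc_add f g : cc f -> cc g -> cc (fun z => f z + g z).
Proof.
move=> [f1 f2] [g1 g2]; split.
  rewrite (_ : (fun z => _) = (fun z => complex.Re (f z) + complex.Re (g z))); last first.
    by apply: funext => z; rewrite ReD.
  move=> x; exact: (continuousD (f1 x) (g1 x)).
rewrite (_ : (fun z => _) = (fun z => complex.Im (f z) + complex.Im (g z))); last first.
  by apply: funext => z; rewrite ImD.
move=> x; exact: (continuousD (f2 x) (g2 x)).
Qed.

Lemma cc_mul f g : cc f -> cc g -> cc (fun z => f z * g z).
Proof.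
move=> [f1 f2] [g1 g2]; split.
  rewrite (_ : (fun z => _) = (fun z => complex.Re (f z) * complex.Re (g z) - complex.Im (f z) * complex.Im (g z))); last first.
    by apply: funext => z; rewrite ReM.
  move=> x; have := continuousD (continuousM (f1 x) (g1 x)) (continuousN (continuousM (f2 x) (g2 x))); exact.
rewrite (_ : (fun z => _) = (fun z => complex.Re (f z) * complex.Im (g z) + complex.Im (f z) * complex.Re (g z))); last first.
  by apply: funext => z; rewrite ImM.
move=> x; have := continuousD (continuousM (f1 x) (g2 x)) (continuousM (f2 x) (g1 x)); exact.
Qed.

Lemma cc_conj f : cc f -> cc (fun z => conjc (f z)).
Proof.
move=> [f1 f2]; split.
  rewrite (_ : (fun z => _) = (fun z => complex.Re (f z))); last first.
    by apply: funext => z; rewrite ReJ.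
  exact: f1.
rewrite (_ : (fun z => _) = (fun z => - complex.Im (f z))); last first.
  by apply: funext => z; rewrite ImJ.
move=> x; exact: (continuousN (f2 x)).
Qed.

Lemma cc_coord j : cc (fun z => @Defs.coord R d z j).
Proof. by split; apply: coord_continuous. Qed.

Lemma cc_exp f n : cc f -> cc (fun z => f z ^+ n).
Proof.
move=> cf; elim: n => [|n IH]; first exact: cc_cst.
under eq_fun do rewrite exprS.
exact: cc_mul.
Qed.

Lemma cc_sum (T : Type) (s : seq T) (F : T -> Cd R d -> R[i]) :
  (forall i, cc (F i)) -> cc (fun z => \sum_(i <- s) F i z).
Proof.
move=> cF; elim: s => [|a s IH].
  under eq_fun do rewrite big_nil. exact: cc_cst.
under eq_fun do rewrite big_cons. exact: cc_add.
Qed.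

Lemma cc_prod (T : Type) (s : seq T) (F : T -> Cd R d -> R[i]) :
  (forall i, cc (F i)) -> cc (fun z => \prod_(i <- s) F i z).
Proof.
move=> cF; elim: s => [|a s IH].
  under eq_fun do rewrite big_nil. exact: cc_cst.
under eq_fun do rewrite big_cons. exact: cc_mul.
Qed.

Lemma cc_peval (P : cpoly R d) : cc (peval P).
Proof.
rewrite /peval /mpoly.meval /mpoly.mmap.
apply: cc_sum => m; apply: cc_mul; first exact: cc_cst.
rewrite /mpoly.mmap1; apply: cc_prod => i; apply: cc_exp; exact: cc_coord.
Qed.

Lemma integ_K (K : set (Cd R d)) (mu : probability (CdB R d) R) (f : CdB R d -> R) :
  compact K -> mu (~` K) = 0%E -> continuous (f : Cd R d -> R) ->
  mu.-integrable (setT : set (CdB R d)) (EFin \o f).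
Proof.
move=> cK mK0 cf.
have mK := compact_mes cK.
have mf : measurable_fun [set: CdB R d] f := cont_mfun cf.
have mEf : measurable_fun (setT : set (CdB R d)) (fun x : CdB R d => (f x)%:E) by apply/measurable_EFinP.
have mCK : measurable (~` K : set (CdB R d)) by exact: measurableC.
apply/(@negligible_integrable _ (CdB R d) R mu setT (~` K) (EFin \o f) mCK measurableT mEf mK0).
rewrite setTD setCK.
apply: measurable_bounded_integrable => //.
- by rewrite (le_lt_trans (probability_le1 _ mK)) // ltry.
- exact: measurable_funS mf.
have [M HM] := cont_bounded cK cf.
exists M; split; first exact: num_real.
move=> y My x Kx /=; rewrite (le_trans (HM x Kx)) //; exact: ltW.
Qed.

Lemma int_le (K : set (Cd R d)) (mu : probability (CdB R d) R) (g : CdB R d -> R) (s : R) :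
  compact K -> mu (~` K) = 0%E -> continuous (g : Cd R d -> R) ->
  (forall x, 0 <= g x) -> (forall x, K x -> g x <= s) -> 0 <= s ->
  Rintegral mu setT g <= s.
Proof.
move=> cK mK0 cg g0 gs s0.
have mK := compact_mes cK.
have mCK : measurable (~` K : set (CdB R d)) by exact: measurableC.
have mg : measurable_fun [set: CdB R d] g := cont_mfun cg.
have mEg : measurable_fun (setT : set (CdB R d)) (fun x : CdB R d => (g x)%:E) by apply/measurable_EFinP.
have h1 : (\int[mu]_(x in setT) (g x)%:E <= \int[mu]_(x in setT) s%:E)%E.
  apply: ae_ge0_le_integral => //.
  - by move=> x _; rewrite lee_fin.
  - exists (~` K : set (CdB R d)); split => // x /= Hx Kx; apply: Hx => _.
    by rewrite lee_fin; apply: gs.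
have h0 : (0 <= \int[mu]_(x in setT) (g x)%:E)%E.
  by apply: integral_ge0 => x _; rewrite lee_fin.
rewrite integral_cst // in h1.
have h2 : (\int[mu]_(x in setT) (g x)%:E <= s%:E)%E.
  apply: (le_trans h1); rewrite -[leRHS]mule1; apply: lee_wpmul2l; first by rewrite lee_fin.
  rewrite le_eqVlt; apply/orP; left; apply/eqP; exact: probability_setT.
move: h0 h2; rewrite /Rintegral.
case: (\int[mu]_(x in setT) (g x)%:E)%E => //= r.
Qed.

Lemma cmod_ge0 (c : R[i]) : 0 <= cmod c.
Proof. exact: sqrtr_ge0. Qed.

Lemma cmod_normc (c : R[i]) : cmod c = Normc.normc c.
Proof. by case: c. Qed.

Lemma cmodM (a b : R[i]) : cmod (a * b) = cmod a * cmod b.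
Proof. by rewrite !cmod_normc Normc.normcM. Qed.

Lemma cmodD (a b : R[i]) : cmod (a + b) <= cmod a + cmod b.
Proof. rewrite !cmod_normc; exact: le_normcD. Qed.

Lemma cmod0 : cmod (0 : R[i]) = 0.
Proof. by rewrite /cmod /= expr0n /= addr0 sqrtr0. Qed.

Lemma cmod_sum (T : Type) (s : seq T) (F : T -> R[i]) :
  cmod (\sum_(i <- s) F i) <= \sum_(i <- s) cmod (F i).
Proof.
elim: s => [|a s IH]; first by rewrite !big_nil cmod0.
rewrite !big_cons; apply: (le_trans (cmodD _ _)); exact: lerD.
Qed.

Lemma cmod_sq (c : R[i]) : cmod c ^+ 2 = complex.Re (c * conjc c).
Proof.
case: c => a b /=; rewrite sqr_sqrtr ?addr_ge0 ?sqr_ge0 //.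
by rewrite mulrN opprK !expr2.
Qed.

Lemma cmod_real (r : R) : cmod (r%:C)%C = `|r|.
Proof. by rewrite /cmod /= expr0n /= addr0 sqrtr_sqr. Qed.

Lemma Re_sum (T : Type) (s : seq T) (F : T -> R[i]) :
  complex.Re (\sum_(i <- s) F i) = \sum_(i <- s) complex.Re (F i).
Proof.
elim: s => [|a s IH]; first by rewrite !big_nil.
by rewrite !big_cons ReD IH.
Qed.

Lemma Im_sum (T : Type) (s : seq T) (F : T -> R[i]) :
  complex.Im (\sum_(i <- s) F i) = \sum_(i <- s) complex.Im (F i).
Proof.
elim: s => [|a s IH]; first by rewrite !big_nil.
by rewrite !big_cons ImD IH.
Qed.

Lemma ReK (n : nat) (B : 'I_n -> cpoly R d) z :
  complex.Re (KNtheta B z z) = \sum_j cmod (peval (B j) z) ^+ 2.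
Proof. by rewrite /KNtheta Re_sum; apply: eq_bigr => j _; rewrite cmod_sq. Qed.

Lemma peval_lin (n : nat) (c : 'I_n -> R[i]) (B : 'I_n -> cpoly R d) z :
  peval (\sum_j c j *: B j) z = \sum_j c j * peval (B j) z.
Proof.
rewrite /peval (big_morph _ (mpoly.mevalD _) (mpoly.meval0 _)).
by apply: eq_bigr => j _; rewrite mpoly.mevalZ.
Qed.

Lemma pevalZ (c : R[i]) (P : cpoly R d) z : peval (c *: P) z = c * peval P z.
Proof. by rewrite /peval mpoly.mevalZ. Qed.

Lemma peval0 z : peval (0 : cpoly R d) z = 0.
Proof. by rewrite /peval mpoly.meval0. Qed.

Lemma in_piZ N theta (c : R[i]) (P : cpoly R d) :
  in_pi N theta P -> in_pi N theta (c *: P).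
Proof.
move=> hP m; rewrite mpoly.mcoeffZ => hm; apply: hP.
by apply: contraNneq hm => ->; rewrite mulr0.
Qed.

Lemma in_pi0 N theta : in_pi N theta (0 : cpoly R d).
Proof. by move=> m; rewrite mpoly.mcoeff0 eqxx. Qed.

Lemma CS (n : nat) (x y : 'I_n -> R) :
  (\sum_i x i * y i) ^+ 2 <= (\sum_i x i ^+ 2) * (\sum_i y i ^+ 2).
Proof.
have H : 0 <= \sum_i \sum_j (x i * y j - x j * y i) ^+ 2.
  by apply: sumr_ge0 => i _; apply: sumr_ge0 => j _; exact: sqr_ge0.
have E : \sum_i \sum_j (x i * y j - x j * y i) ^+ 2 =
   2 * ((\sum_i x i ^+ 2) * (\sum_i y i ^+ 2) - (\sum_i x i * y i) ^+ 2).
  have e1 : forall i j, (x i * y j - x j * y i) ^+ 2 =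
     (x i ^+ 2 * y j ^+ 2 + y i ^+ 2 * x j ^+ 2) - 2 * ((x i * y i) * (x j * y j)).
    by move=> i j; ring.
  under eq_bigr do under eq_bigr do rewrite e1.
  under eq_bigr do rewrite sumrB big_split /= -mulr_sumr -mulr_sumr -mulr_sumr.
  under eq_bigr do rewrite -mulr_sumr.
  rewrite sumrB big_split /= -!mulr_suml -mulr_sumr -mulr_suml.
  rewrite expr2; ring.
have E2 : 0 <= (\sum_i x i ^+ 2) * (\sum_i y i ^+ 2) - (\sum_i x i * y i) ^+ 2.
  by rewrite -(pmulr_rge0 _ (ltr0Sn _ 1)) -E.
by rewrite -subr_ge0.
Qed.


Lemma peval_bd (K : set (Cd R d)) (P : cpoly R d) : compact K ->
  exists M, forall x, K x -> cmod (peval P x) <= M.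
Proof.
move=> cK.
have cP := cc_peval P.
have [M HM] := cont_bounded cK (cc_mul cP (cc_conj cP)).1.
exists (Num.sqrt M) => x Kx.
rewrite -[cmod _]ger0_norm ?cmod_ge0 // -sqrtr_sqr cmod_sq.
apply: ler_wsqrtr; exact: le_trans (ler_norm _) (HM x Kx).
Qed.

Lemma supnorm_ub (K : set (Cd R d)) (P : cpoly R d) x : compact K -> K x ->
  cmod (peval P x) <= supnorm K (peval P).
Proof.
move=> cK Kx; have [M HM] := peval_bd P cK.
apply: (ub_le_sup); last by exists x.
by exists M => _ [y Ky <-]; exact: HM.
Qed.

Lemma supnorm_le (K : set (Cd R d)) (f : Cd R d -> R[i]) s : K !=set0 ->
  (forall x, K x -> cmod (f x) <= s) -> supnorm K f <= s.
Proof.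
move=> [x Kx] H; apply: ge_sup; first by exists (cmod (f x)), x.
by move=> _ [y Ky <-]; exact: H.
Qed.

Lemma supnorm_ge0 (K : set (Cd R d)) (P : cpoly R d) : compact K -> K !=set0 ->
  0 <= supnorm K (peval P).
Proof.
move=> cK [x Kx]; exact: le_trans (cmod_ge0 _) (supnorm_ub P cK Kx).
Qed.

Lemma ct_sum (T : Type) (s : seq T) (F : T -> Cd R d -> R) :
  (forall i, continuous (F i)) -> continuous (fun x => \sum_(i <- s) F i x).
Proof.
move=> cF; elim: s => [|a s IH].
  under eq_fun do rewrite big_nil. exact: cst_continuous.
under eq_fun do rewrite big_cons.
move=> x; exact: (continuousD (cF a x) (IH x)).
Qed.

Lemma Rint_sum (K : set (Cd R d)) (mu : probability (CdB R d) R)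
  (T : Type) (s : seq T) (F : T -> CdB R d -> R) :
  compact K -> mu (~` K) = 0%E -> (forall i, continuous (F i : Cd R d -> R)) ->
  Rintegral mu setT (fun x => \sum_(i <- s) F i x) =
  \sum_(i <- s) Rintegral mu setT (F i).
Proof.
move=> cK mK0 cF; elim: s => [|a s IH].
  under eq_Rintegral do rewrite big_nil.
  by rewrite Rintegral_cst // mul0r big_nil.
under eq_Rintegral do rewrite big_cons.
rewrite RintegralD //.
- by rewrite big_cons IH.
- exact: (integ_K cK mK0 (cF a)).
- apply: (@integ_K K mu (fun x : CdB R d => \sum_(j <- s) F j x) cK mK0).
  exact: (ct_sum (s := s) (F := fun i => (F i : Cd R d -> R)) cF).

Qed.

Lemma ct_scale (a : R) (f : Cd R d -> R) : continuous f -> continuous (fun x => a * f x).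
Proof. move=> cf x; have := continuousM (@cst_continuous _ _ a x) (cf x); exact. Qed.

Lemma ct_lin (a b : R) (f g : Cd R d -> R) : continuous f -> continuous g ->
  continuous (fun x => a * f x - b * g x).
Proof.
move=> cf cg.
have h1 := ct_scale (a:=a) cf. have h2 := ct_scale (a:=b) cg.
move=> x; have := continuousD (h1 x) (continuousN (h2 x)); exact.
Qed.

Lemma onb_int (K : set (Cd R d)) (mu : probability (CdB R d) R) N theta n
  (B : 'I_n -> cpoly R d) (c : 'I_n -> R[i]) :
  compact K -> mu (~` K) = 0%E -> is_onb mu N theta B ->
  Rintegral mu setT (fun x : CdB R d =>
    complex.Re (peval (\sum_j c j *: B j) x * conjc (peval (\sum_j c j *: B j) x)))
  = \sum_i cmod (c i) ^+ 2.
Proof.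
move=> cK mK0 [_ Horth _].
pose w i j (x : CdB R d) := peval (B i) x * conjc (peval (B j) x).
pose a i j := c i * conjc (c j).
have cw : forall i j, cc (w i j) by move=> i j; exact: (cc_mul (cc_peval _) (cc_conj (cc_peval _))).
have pw : forall x : CdB R d, complex.Re (peval (\sum_j c j *: B j) x * conjc (peval (\sum_j c j *: B j) x))
   = \sum_i \sum_j (complex.Re (a i j) * complex.Re (w i j x) - complex.Im (a i j) * complex.Im (w i j x)).
  move=> x; rewrite peval_lin rmorph_sum mulr_suml Re_sum; apply: eq_bigr => i _.
  rewrite mulr_sumr Re_sum; apply: eq_bigr => j _.
  rewrite -ReM /a /w rmorphM /=; congr complex.Re; ring.
under eq_Rintegral do rewrite pw.
have ct1 : forall i j, continuous (fun x : Cd R d => complex.Re (a i j) * complex.Re (w i j x) - complex.Im (a i j) * complex.Im (w i j x)).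
  by move=> i j; apply: ct_lin; [exact: (cw i j).1 | exact: (cw i j).2].
rewrite (Rint_sum (K:=K)) //; last first.
  by move=> i; apply: (ct_sum (F := fun j x => complex.Re (a i j) * complex.Re (w i j x) - complex.Im (a i j) * complex.Im (w i j x))) => j; exact: ct1.
apply: eq_bigr => i _.
rewrite (Rint_sum (K:=K)) //.
have key : forall j, Rintegral mu setT (fun x : CdB R d => complex.Re (a i j) * complex.Re (w i j x) - complex.Im (a i j) * complex.Im (w i j x)) = complex.Re (a i j) * complex.Re ((i == j)%:R : R[i]) - complex.Im (a i j) * complex.Im ((i == j)%:R : R[i]).
  move=> j.
  have iRe := integ_K cK mK0 (ct_scale (a:=complex.Re (a i j)) (cw i j).1).
  have iIm := integ_K cK mK0 (ct_scale (a:=complex.Im (a i j)) (cw i j).2).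
  rewrite RintegralB //.
  rewrite RintegralZl //; last exact: (integ_K cK mK0 (cw i j).1).
  rewrite RintegralZl //; last exact: (integ_K cK mK0 (cw i j).2).
  by rewrite -(Horth i j).
rewrite (eq_bigr _ (fun j _ => key j)).
rewrite (bigD1 i) //= big1 ?addr0; last first.
  by move=> j /negbTE; rewrite eq_sym => ->; rewrite /= mulr0 mulr0 subr0.
by rewrite eqxx /= mulr1 mulr0 subr0 cmod_sq.
Qed.

Lemma sq_le (a b : R) : 0 <= a -> a <= b -> a ^+ 2 <= b ^+ 2.
Proof. move=> a0 ab; rewrite !expr2; apply: ler_pM => //. Qed.

Lemma lower (K : set (Cd R d)) (mu : probability (CdB R d) R) N theta n
  (B : 'I_n -> cpoly R d) (P : cpoly R d) z :
  compact K -> mu (~` K) = 0%E -> K !=set0 -> is_onb mu N theta B ->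
  in_pi N theta P -> supnorm K (peval P) <= 1 ->
  cmod (peval P z) ^+ 2 <= complex.Re (KNtheta B z z).
Proof.
move=> cK mK0 ne onb hP hs.
have [_ _ Hspan] := onb.
have [c Pc] := Hspan P hP.
have h1 : \sum_i cmod (c i) ^+ 2 <= 1.
  rewrite -(onb_int c cK mK0 onb) -Pc.
  apply: (int_le cK mK0) => //.
  - exact: (cc_mul (cc_peval P) (cc_conj (cc_peval P))).1.
  - by move=> x; rewrite -cmod_sq; exact: sqr_ge0.
  - move=> x Kx; rewrite -cmod_sq -(expr1n _ 2); apply: sq_le; first exact: cmod_ge0.
    exact: le_trans (supnorm_ub P cK Kx) hs.
rewrite ReK Pc peval_lin.
apply: (@le_trans _ _ ((\sum_j cmod (c j) * cmod (peval (B j) z)) ^+ 2)).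
  apply: sq_le; first exact: cmod_ge0.
  apply: (le_trans (cmod_sum _ _)); apply: ler_sum => j _; rewrite cmodM //.
apply: (le_trans (CS _ _)).
apply: ler_piMl => //.
by apply: sumr_ge0 => j _; exact: sqr_ge0.
Qed.

Section PhiS.
Variables (K : set (Cd R d)) (mu : probability (CdB R d) R) (N : nat) (theta : R)
  (n : nat) (B : 'I_n -> cpoly R d) (z : Cd R d).
Hypotheses (cK : compact K) (mK0 : mu (~` K) = 0%E) (ne : K !=set0)
  (onb : is_onb mu N theta B).

Let S := [set cmod (peval P z) | P in
         [set P : cpoly R d | in_pi N theta P /\ supnorm K (peval P) <= 1]].

Lemma ReK_ge0 : 0 <= complex.Re (KNtheta B z z).
Proof. by rewrite ReK; apply: sumr_ge0 => j _; exact: sqr_ge0. Qed.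

Lemma S_ub : ubound S (Num.sqrt (complex.Re (KNtheta B z z))).
Proof.
move=> _ [P [hP hs] <-].
rewrite -[cmod _]ger0_norm ?cmod_ge0 // -sqrtr_sqr.
apply: ler_wsqrtr; exact: (lower z cK mK0 ne onb hP hs).
Qed.

Lemma S0 : S 0.
Proof.
exists 0; last by rewrite peval0 cmod0.
split; first exact: in_pi0.
by apply: supnorm_le => // x _; rewrite peval0 cmod0.
Qed.

Lemma Phi_ub P : in_pi N theta P -> supnorm K (peval P) <= 1 ->
  cmod (peval P z) <= Phi K theta N z.
Proof.
move=> hP hs; apply: ub_le_sup; last by exists P.
by exists (Num.sqrt (complex.Re (KNtheta B z z))); exact: S_ub.
Qed.

Lemma Phi_ge0 : 0 <= Phi K theta N z.
Proof.
have := Phi_ub (in_pi0 N theta).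
rewrite peval0 cmod0; apply.
by apply: supnorm_le => // x _; rewrite peval0 cmod0.
Qed.

Lemma Phi_le : Phi K theta N z ^+ 2 <= complex.Re (KNtheta B z z).
Proof.
rewrite -(sqr_sqrtr ReK_ge0); apply: sq_le; first exact: Phi_ge0.
apply: ge_sup; first by exists 0; exact: S0.
exact: S_ub.
Qed.

Lemma by_Phi P : in_pi N theta P ->
  cmod (peval P z) <= Phi K theta N z * supnorm K (peval P).
Proof.
move=> hP.
have s0 := supnorm_ge0 P cK ne.
set s := supnorm K (peval P) in s0 *.
have [sz|spos] := eqVneq s 0.
  rewrite sz mulr0.
  have [a0|apos] := lerP (cmod (peval P z)) 0; first by [].
  exfalso.
  set a := cmod (peval P z) in apos.
  set t := (Phi K theta N z + 1) / a.
  have t0 : 0 < t by rewrite divr_gt0 // ltr_wpDl // Phi_ge0.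
  have := @Phi_ub ((t%:C)%C *: P) (in_piZ (c:=(t%:C)%C) hP).
  rewrite pevalZ cmodM cmod_real gtr0_norm //.
  have -> : t * a = Phi K theta N z + 1 by rewrite /t mulrVK // unitfE gt_eqF.
  have hs : supnorm K (peval ((t%:C)%C *: P)) <= 1.
    apply: supnorm_le => // x Kx; rewrite pevalZ cmodM cmod_real gtr0_norm //.
    have := supnorm_ub P cK Kx; rewrite -/s sz => hx.
    rewrite (le_trans (ler_wpM2l (ltW t0) hx)) // mulr0; exact: ler01.
  move=> /(_ hs); lra.
have sp : 0 < s by rewrite lt_def spos s0.
set Q := ((s^-1)%:C)%C *: P.
have hQ : supnorm K (peval Q) <= 1.
  apply: supnorm_le => // x Kx; rewrite pevalZ cmodM cmod_real gtr0_norm ?invr_gt0 //.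
  rewrite mulrC -ler_pdivlMr //; last by rewrite invr_gt0.
  by rewrite invrK mul1r; exact: supnorm_ub.
have hQ2 : in_pi N theta Q by exact: in_piZ.
have := @Phi_ub Q hQ2 hQ.
rewrite pevalZ cmodM cmod_real gtr0_norm ?invr_gt0 //.
move=> h; rewrite -ler_pdivrMr // mulrC; exact: h.
Qed.
End PhiS.

Lemma L2_one (mu : probability (CdB R d) R) N theta n (B : 'I_n -> cpoly R d) j :
  is_onb mu N theta B -> L2norm mu (peval (B j)) = 1.
Proof.
move=> [_ Horth _].
have h := congr1 (@complex.Re R) (Horth j j).
rewrite eqxx /= in h.
rewrite /L2norm.
under eq_integral do rewrite cmod_sq.
have -> : fine (\int[mu]_(x in setT) (complex.Re (peval (B j) x * conjc (peval (B j) x)))%:E)%E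
  = Rintegral mu setT (fun x => complex.Re (peval (B j) x * conjc (peval (B j) x))) by [].
by rewrite h sqrtr1.
Qed.

Lemma K_ne (K : set (Cd R d)) (mu : probability (CdB R d) R) :
  mu (~` K) = 0%E -> K !=set0.
Proof.
move=> mK0; apply/set0P/negP => /eqP K0.
have h1 := probability_setT mu.
move: mK0; rewrite K0 setC0.
move=> h; rewrite h in h1.
by case: h1 => /eqP; rewrite eq_sym oner_eq0.
Qed.
End H.

Unset Implicit Arguments.

Theorem mainTheorem13 (R : realType) (d : nat) (theta : R)
    (K : set (Cd R d)) (mu : probability (CdB R d) R) :
  0 <= theta <= 1 ->
  compact K ->
  mu (~` K) = 0%E ->
  BM_theta K mu theta ->
  forall eps : R, 0 < eps -> exists C : R, 0 < C /\
    forall (N : nat) (B : 'I_(dNtheta d N theta) -> cpoly R d),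
      is_onb mu N theta B ->
      forall z : Cd R d,
        (Phi K theta N z) ^+ 2 / (dNtheta d N theta)%:R
          <= complex.Re (KNtheta B z z)
        /\ complex.Re (KNtheta B z z)
          <= C * expR (eps * N%:R) * (Phi K theta N z) ^+ 2
               * (dNtheta d N theta)%:R.
Proof.
move=> _ cK mK0 BM eps eps0.
have ne := K_ne mK0.
have [C [C0 HC]] := BM (eps / 2) (divr_gt0 eps0 (ltr0Sn _ 1)).
exists (C ^+ 2); split; first exact: exprn_gt0.
move=> N B onb z.
have Kge0 := ReK_ge0 B z.
have Phi0 := Phi_ge0 z cK mK0 ne onb.
split.
  have hle := Phi_le z cK mK0 ne onb.
  have [n0|npos] := eqVneq (dNtheta d N theta) 0%N.
    have -> : (dNtheta d N theta)%:R = 0 :> R by rewrite n0.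
    by rewrite invr0 mulr0.
  rewrite ler_pdivrMr ?ltr0n ?lt0n //.
  apply: (le_trans hle); apply: ler_peMr => //.
  by rewrite ler1n lt0n.
set E := expR (eps / 2 * N%:R).
have E0 : 0 < E by exact: expR_gt0.
have hj : forall j, cmod (peval (B j) z) <= Phi K theta N z * (C * E).
  move=> j; have [hB _ _] := onb.
  apply: (le_trans (by_Phi z cK mK0 ne onb (hB j))).
  apply: ler_wpM2l => //.
  by have := HC N (B j) (hB j); rewrite (L2_one j onb) mulr1.
rewrite ReK.
apply: (@le_trans _ _ (\sum_(j < dNtheta d N theta) (Phi K theta N z * (C * E)) ^+ 2)).
  by apply: ler_sum => j _; apply: sq_le; [exact: cmod_ge0 | exact: hj].
rewrite sumr_const card_ord -[X in X <= _]mulr_natr.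
have -> : expR (eps * N%:R) = E ^+ 2.
  by rewrite expr2 /E -expRD; congr expR; field.
rewrite le_eqVlt; apply/orP; left; apply/eqP; ring.
Qed.
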